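(* Let $q$ be an odd prime power, let $s,t\ge0$ and $k\ge1$ be integers and $n=2k$. Let $\delta,\gamma\in\mathbb{F}_{q^k}$, let $\alpha\in\mathbb{F}_{q^n}$ satisfy $\alpha^{q^k}=-\alpha$ and $\beta\in\mathbb{F}_{q^n}$ satisfy $\beta^{q^k}=-\beta$. Then $$f(x)=\alpha(x^{q^k}+x+\delta)^t+\beta\,\mathrm{Tr}(x)+\gamma x^{q^s}$$ is a permutation polynomial of $\mathbb{F}_{q^n}$ if and only if $\gamma\neq0$.
   Context: $\mathrm{Tr}$ denotes the trace function from $\mathbb{F}_{q^n}$ to $\mathbb{F}_q$, $\mathrm{Tr}(x)=x+x^q+\cdots+x^{q^{n-1}}$. A permutation polynomial of $\mathbb{F}_{q^n}$ is one inducing a bijection of $\mathbb{F}_{q^n}$. *)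

(* Defs.v *)
From mathcomp Require Import all_boot all_order all_algebra all_field.
Set Implicit Arguments. Unset Strict Implicit. Unset Printing Implicit Defensive.
Import GRing.Theory.
Local Open Scope ring_scope.

Definition Tr (F : finFieldType) (q n : nat) (x : F) : F :=
  \sum_(i < n) x ^+ (q ^ i).

Definition prime_power (q : nat) : Prop :=
  exists p m : nat, prime p /\ (0 < m)%N /\ q = (p ^ m)%N.

Definition is_perm_poly (F : finFieldType) (f : F -> F) : Prop := bijective f.

(* Main.v *)
Require Import Defs.
From mathcomp Require Import all_boot all_order all_algebra all_field.
From mathcomp Require Import ring.
Import GRing.Theory.
Local Open Scope ring_scope.

Section Frob.
Variables (F : finFieldType) (q : nat).
Hypothesis hq : [pchar F].-nat q.

Lemma qpos : (0 < q)%N. Proof. by case/andP: hq. Qed.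

Lemma frobD i (x y : F) : (x + y) ^+ (q ^ i) = x ^+ (q ^ i) + y ^+ (q ^ i).
Proof. by apply: exprDn_pchar; rewrite pnatX hq. Qed.

Lemma frob0 i : (0 : F) ^+ (q ^ i) = 0.
Proof. by rewrite expr0n expn_eq0 eqn0Ngt qpos. Qed.

Lemma frobN i (x : F) : (- x) ^+ (q ^ i) = - x ^+ (q ^ i).
Proof. by apply/eqP; rewrite -addr_eq0 addrC -frobD subrr frob0. Qed.

Lemma frobB i (x y : F) : (x - y) ^+ (q ^ i) = x ^+ (q ^ i) - y ^+ (q ^ i).
Proof. by rewrite frobD frobN. Qed.

Lemma frob_inj i : injective (fun x : F => x ^+ (q ^ i)).
Proof.
move=> x y /= /eqP; rewrite -subr_eq0 -frobB expf_eq0 subr_eq0 expn_gt0 qpos /=.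
by move/eqP.
Qed.

Lemma frob_sum i (n : nat) (G : 'I_n -> F) :
  (\sum_(j < n) G j) ^+ (q ^ i) = \sum_(j < n) (G j) ^+ (q ^ i).
Proof. exact: (big_morph (fun x : F => x ^+ (q ^ i)) (frobD i) (frob0 i)). Qed.
End Frob.

Theorem mainTheorem6 (q : nat) (s t k : nat) (F : finFieldType)
    (delta gamma alpha beta : F) :
    prime_power q -> odd q -> (1 <= k)%N ->
    #|F| = (q ^ (2 * k))%N ->
    delta ^+ (q ^ k) = delta ->
    gamma ^+ (q ^ k) = gamma ->
    alpha ^+ (q ^ k) = - alpha ->
    beta ^+ (q ^ k) = - beta ->
    is_perm_poly (fun x : F =>
       alpha * (x ^+ (q ^ k) + x + delta) ^+ t
       + beta * Tr q (2 * k) x + gamma * x ^+ (q ^ s))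
    <-> gamma != 0.
Proof.
move=> [p [m [pp [m0 ->]]]] oq k1 cardF hd hg ha hb.
have pF : p \in [pchar F].
  by apply: (card_finPcharP _ pp); rewrite cardF -expnM.
have hq : [pchar F].-nat (p ^ m)%N by rewrite pnatX (pnatE _ pp) pF.
set Q := (p ^ m)%N in hq oq cardF hd hg ha hb *.
set sg := fun x : F => x ^+ (Q ^ k).
have sgsg : forall x, sg (sg x) = x.
  by move=> x; rewrite /sg -exprM -expnD addnn -mul2n -cardF expf_card.
have sgD : forall x y, sg (x + y) = sg x + sg y by move=> x y; apply: frobD.
have sgM : forall x y, sg (x * y) = sg x * sg y by move=> x y; apply: exprMn.
have sgX : forall x n, sg (x ^+ n) = sg x ^+ n by move=> x n; rewrite /sg exprAC.
have sgF : forall x i, sg (x ^+ (Q ^ i)) = (sg x) ^+ (Q ^ i) by move=> x i; rewrite /sg exprAC.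
have TrE : forall x, Tr Q (2 * k) x = \sum_(i < k) (x + sg x) ^+ (Q ^ i).
  move=> x; rewrite /Tr mul2n -addnn big_split_ord /= -big_split /=.
  apply: eq_bigr => i _; rewrite frobD // /sg -exprM -expnD addnC //.
have sgT : forall x, sg (Tr Q (2 * k) x) = Tr Q (2 * k) x.
  move=> x; rewrite TrE /sg frob_sum //; apply: eq_bigr => i _.
  by rewrite exprAC -/(sg _) sgD sgsg addrC.
set f := fun x : F => _.
have key : forall x, f x + sg (f x) = gamma * (x + sg x) ^+ (Q ^ s).
  have hd' : sg delta = delta := hd.
  have hg' : sg gamma = gamma := hg.
  have ha' : sg alpha = - alpha := ha.
  have hb' : sg beta = - beta := hb.
  move=> x; rewrite /f !sgD !sgM sgT sgX !sgD sgsg sgF hd' hg' ha' hb'.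
  rewrite -/(sg x). rewrite (addrC (sg x) x) (@frobD _ _ hq).
  ring.
have two : (2%:R : F) != 0.
  rewrite -(dvdn_pcharf pF); rewrite (dvdn_prime2 (pcharf_prime pF) (isT : prime 2)); apply/negP.
  move/eqP=> p2; move: oq; rewrite /Q p2 oddX /=.
  by rewrite orbF; move/eqP=> m00; rewrite m00 in m0.
split.
  move=> [g fg gf]; apply/negP => /eqP g0.
  have := key (g 1); rewrite gf g0 mul0r /sg expr1n => /eqP.
  by rewrite -mulr2n (negPf two).
move=> gn0; apply: injF_bij => x y fxy.
have hy : x + sg x = y + sg y.
  apply: (@frob_inj _ _ hq s); apply: (mulfI gn0).
  by rewrite -!key fxy.
move: fxy; rewrite /f TrE TrE.
have -> : x ^+ (Q ^ k) + x = x + sg x by rewrite addrC.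
have -> : y ^+ (Q ^ k) + y = y + sg y by rewrite addrC.
rewrite hy => /addrI H1.
have H2 := mulfI gn0 H1.
exact: (@frob_inj _ _ hq s _ _ H2).
Qed.
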